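(* Let $X$ be a finite or countably infinite set and $\mathcal{S}=\langle x_1,\dots,x_n\rangle\in X^n$ a sample. For any constant $C>1$ and probability distributions $q,q'$ on $X$ such that $\frac1C q(x)\le q'(x)\le Cq(x)$ for all $x\in X$, the distinguisher $f:X\to[0,1]$ defined by $$f(x)=\frac{1}{2\log C}\log\frac{Cq(x)}{q'(x)}$$ has training advantage (relative to $q$ and $\mathcal{S}$) $$\hat\alpha(f)\ge\frac{\hat{L}(q;\mathcal{S})-\hat{L}(q';\mathcal{S})}{2\log C}.$$
   Context: The log-loss of a distribution $q$ on the sample is $\hat{L}(q;\mathcal{S})=-\frac{1}{n}\sum_{i=1}^n\log q(x_i)$. The empirical expectation is $\hat{\mathrm{E}}_{\mathcal{S}}[h(x)]=\frac1n\sum_{i=1}^n h(x_i)$. The training advantage of $f:X\to[0,1]$ relative to $q$ and $\mathcal{S}$ is $\hat\alpha(f)=\mathrm{E}_{x\sim q}[f(x)]-\hat{\mathrm{E}}_{\mathcal{S}}[f(x)]$. *)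

(* Defs.v *)
From HB Require Import structures.
From mathcomp Require Import all_boot all_order all_algebra.
From mathcomp Require Import all_classical all_reals all_analysis.
Set Implicit Arguments. Unset Strict Implicit. Unset Printing Implicit Defensive.
Import Order.TTheory GRing.Theory Num.Theory.
Local Open Scope classical_set_scope.
Local Open Scope ring_scope.

Section Defs.
Variables (R : realType) (X : countType).

Definition is_distribution (q : X -> R) : Prop :=
  (forall x, 0 <= q x) /\ (\esum_(x in [set: X]) (q x)%:E = 1)%E.

Definition expect (q : X -> R) (h : X -> R) : \bar R :=
  (\esum_(x in [set: X]) (q x * h x)%:E)%E.

Definition emp_expect (n : nat) (S : 'I_n -> X) (h : X -> R) : R :=
  n%:R^-1 * \sum_(i < n) h (S i).

Definition log_loss (n : nat) (S : 'I_n -> X) (q : X -> R) : R :=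
  - (n%:R^-1 * \sum_(i < n) ln (q (S i))).

Definition training_advantage (q : X -> R) (n : nat) (S : 'I_n -> X)
  (f : X -> R) : \bar R :=
  (expect q f - (emp_expect S f)%:E)%E.

Definition distinguisher (C : R) (q q' : X -> R) (x : X) : R :=
  (2 * ln C)^-1 * ln (C * q x / q' x).

End Defs.

(* Main.v *)
Require Import Defs.
From HB Require Import structures.
From mathcomp Require Import all_boot all_order all_algebra.
From mathcomp Require Import all_classical all_reals all_analysis.
From mathcomp Require Import lra.
Import Order.TTheory GRing.Theory Num.Theory.
Local Open Scope ring_scope.

Lemma pt (R : realType) (C Q Q' : R) : 1 < C -> 0 <= Q -> 0 <= Q' ->
  C^-1 * Q <= Q' <= C * Q ->
  [/\ 0 <= (2 * ln C)^-1 * ln (C * Q / Q') <= 1,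
      (2 * ln C)^-1 * ln (C * Q / Q') <= 2^-1 + (2 * ln C)^-1 * (ln Q - ln Q'),
      0 <= Q * ((2 * ln C)^-1 * ln (C * Q / Q')) &
      (2 * ln C)^-1 * (ln C + 1) * Q <= Q * ((2 * ln C)^-1 * ln (C * Q / Q')) + (2 * ln C)^-1 * Q'].
Proof.
move=> C1 Q0 Q'0 /andP[h1 h2].
have lc0 : 0 < ln C by apply: ln_gt0.
have C0 : 0 < C by lra.
have a0 : 0 < (2 * ln C)^-1 by rewrite invr_gt0; lra.
have ha : (2 * ln C)^-1 * ln C = 2^-1.
  by rewrite invfM -mulrA mulVf ?mulr1 // gt_eqF.
set a := (2 * ln C)^-1 in a0 ha *.
have [Qe|Qp] := eqVneq Q 0.
  rewrite Qe mulr0 in h2; rewrite Qe.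
  have -> : Q' = 0 by apply/eqP; rewrite eq_le Q'0 andbT.
  rewrite ?mulr0 ?mul0r ?ln0 // ?mulr0 ?mul0r ?addr0 ?subr0 ?mulr0; split; try lra.
have Qp' : 0 < Q by rewrite lt_def Qp Q0.
have Q'p : 0 < Q'.
  by apply: lt_le_trans h1; rewrite mulr_gt0 // invr_gt0.
have eL : ln (C * Q / Q') = ln C + ln Q - ln Q'.
  by rewrite ln_div ?lnM // posrE ?mulr_gt0.
rewrite eL.
have g : ln Q' - ln Q <= Q' / Q - 1.
  rewrite -ln_div ?posrE //.
  have := @le_ln1Dx R (Q' / Q - 1).
  have -> : 1 + (Q' / Q - 1) = Q' / Q by rewrite addrC subrK.
  apply.
  have : 0 < Q' / Q by rewrite divr_gt0.
  lra.
have gq : Q * (ln Q' - ln Q) <= Q' - Q.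
  have e : Q * (Q' / Q - 1) = Q' - Q.
    by rewrite mulrBr mulr1 mulrCA mulfV ?mulr1 // gt_eqF.
  by rewrite -e; exact: (ler_wpM2l Q0 g).
have r1 : 1 <= C * Q / Q'.
  by rewrite ler_pdivlMr // mul1r.
have r2 : C * Q / Q' <= C * C.
  rewrite ler_pdivrMr // -mulrA; apply: ler_wpM2l; first lra.
  by rewrite -ler_pdivrMl // mulrC.
have L0 : 0 <= ln C + ln Q - ln Q' by rewrite -eL; apply: ln_ge0.
have L1 : ln C + ln Q - ln Q' <= 2 * ln C.
  rewrite -eL.
  have -> : 2 * ln C = ln (C * C) by rewrite lnM ?posrE //; lra.
  rewrite ler_ln ?posrE // ?mulr_gt0 //.
  by rewrite invr_gt0.
split.
- apply/andP; split; first exact: mulr_ge0 (ltW a0) L0.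
  have ha2 : a * (2 * ln C) = 1 by rewrite mulVf // gt_eqF // mulr_gt0.
  nra.
- by rewrite -ha; lra.
- by apply: mulr_ge0 => //; exact: mulr_ge0 (ltW a0) L0.
- nra.
Qed.

Lemma esumZ (R : realType) (T : choiceType) (I : set T) (c : R) (b : T -> \bar R) :
  0 < c -> (forall i, (0 <= b i)%E) ->
  (\esum_(i in I) (c%:E * b i) = c%:E * \esum_(i in I) b i)%E.
Proof.
move=> c0 b0; rewrite /esum -ereal_sup_pZl //; congr ereal_sup.
apply/seteqP; split => x /=.
- case=> A hA <-; exists (\sum_(i \in A) b i)%E; first by exists A.
  by rewrite ge0_mule_fsumr.
- case=> y [A hA <-] <-; exists A => //.
  by rewrite ge0_mule_fsumr.
Qed.

Theorem lemma2 (R : realType) (X : countType) (n : nat) (S : 'I_n -> X)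
  (C : R) (q q' : X -> R) :
  1 < C ->
  is_distribution q -> is_distribution q' ->
  (forall x, C^-1 * q x <= q' x <= C * q x) ->
  (forall x, 0 <= distinguisher C q q' x <= 1) /\
  (training_advantage q S (distinguisher C q q') >=
     ((log_loss S q - log_loss S q') / (2 * ln C))%:E)%E.
Proof.
move=> C1 [q0 qs] [q'0 q's] hb.
have P x := @pt R C (q x) (q' x) C1 (q0 x) (q'0 x) (hb x).
split; first by move=> x; case: (P x).
have lc0 : 0 < ln C by apply: ln_gt0.
have a0 : 0 < (2 * ln C)^-1 by rewrite invr_gt0; lra.
have ha : (2 * ln C)^-1 * ln C = 2^-1.
  by rewrite invfM -mulrA mulVf ?mulr1 // gt_eqF.
rewrite /training_advantage.
set f := distinguisher C q q'.
set a := (2 * ln C)^-1 in a0 ha *.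
have E0 : (0 <= expect q f)%E.
  apply: esum_ge0 => x _; rewrite lee_fin; by case: (P x).
have Eh : ((2^-1)%:E <= expect q f)%E.
  have e1 : (\esum_(x in [set: X]) ((q x * f x)%:E + (a * q' x)%:E)
            = expect q f + a%:E)%E.
    rewrite esumD //; last first.
    - by move=> x _; rewrite lee_fin mulr_ge0 // ltW.
    - by move=> x _; rewrite lee_fin; case: (P x).
    congr (_ + _)%E.
    under eq_esum do rewrite EFinM.
    by rewrite esumZ // ?q's ?mule1 // => x; rewrite lee_fin.
  have e2 : (\esum_(x in [set: X]) ((a * (ln C + 1)) * q x)%:E
            = (a * (ln C + 1))%:E)%E.
    under eq_esum do rewrite EFinM.
    have c0 : 0 < a * (ln C + 1) by apply: mulr_gt0 => //; lra.
    by rewrite esumZ ?qs ?mule1 // => x; rewrite lee_fin.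
  have : ((a * (ln C + 1))%:E <= expect q f + a%:E)%E.
    rewrite -e1 -e2; apply: le_esum => x _.
    rewrite -EFinD lee_fin; case: (P x) => _ _ _.
    by rewrite /f /distinguisher.
  move: E0; case: (expect q f) => [e| |] //.
  - move=> _; rewrite -EFinD !lee_fin => h; nra.
  - by move=> _ _; rewrite leey.
have Nn : n%:R^-1 * n%:R <= 1 :> R.
  have [->|n0] := eqVneq n 0%N; first by rewrite mulr0.
  by rewrite mulVf // pnatr_eq0.
set N := n%:R^-1 : R.
have N0 : 0 <= N by rewrite /N invr_ge0.
set SA := \sum_(i < n) ln (q (S i)).
set SB := \sum_(i < n) ln (q' (S i)).
have hS : \sum_(i < n) f (S i) <= 2^-1 * n%:R + a * (SA - SB).
  have : \sum_(i < n) f (S i) <= \sum_(i < n) (2^-1 + a * (ln (q (S i)) - ln (q' (S i)))).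
    apply: ler_sum => i _; case: (P (S i)) => _ h _ _; exact: h.
  suff -> : \sum_(i < n) (2^-1 + a * (ln (q (S i)) - ln (q' (S i)))) = 2^-1 * n%:R + a * (SA - SB) by [].
  by rewrite big_split /= sumr_const card_ord mulr_natr /SA /SB -sumrB mulr_sumr.
have hN := ler_wpM2l N0 hS.
move: Eh; rewrite /emp_expect /log_loss -/N -/SA -/SB.
case: (expect q f) => [e| |] //.
- move=> h.
  have -> : (e%:E - (N * \sum_(i < n) f (S i))%:E)%E = (e - N * \sum_(i < n) f (S i))%:E by [].
  rewrite !lee_fin in h *; move: Nn; rewrite -/N => Nn; nra.
- by move=> _; rewrite leey.
Qed.
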